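(* In the setting described in the context, let $u_1=\min\{x\in[d,v]: f^{2}(x)=d\}$, $\breve u_0'=\max\{x\in[u_1,v]: f^2(x)=d\}$, and for $n\ge1$ let $\breve\mu_{m,n}=\min\{x\in[\breve u_0',v]: f^{m+2n}(x)=d\}$ (these sets are nonempty). Then for each $n\ge1$, every periodic point of $f$ in $[\breve u_0',\breve\mu_{m,n}]$ whose least period is odd has least period $\ge m+2n$.
   Context: Let $I$ be a compact interval and $f:I\to I$ continuous; $f^1=f$, $f^n=f\circ f^{n-1}$. A point $x_0$ is a periodic point of least period $k$ (a period-$k$ point) if $f^k(x_0)=x_0$ and $f^i(x_0)\ne x_0$ for $0<i<k$. Let $m\ge3$ be odd and let $P$ be a periodic orbit of $f$ of least period $m$. Put $e=f^{m-1}(\min P)$. Let $v\in[\min P,e)$ be a point with $f(v)=e$, and let $z\in(v,e)$ be a fixed point of $f$ (such points exist). Define $z_0=\min\{x\in[v,z]: f^2(x)=x\}$ and $d=\max\{x\in[\min P,v]: f^2(x)=z_0\}$ (both sets are nonempty). *)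

(* Defs.v *)
From Stdlib Require Import Reals Lia.
Open Scope R_scope.

Fixpoint iter (f : R -> R) (n : nat) (x : R) : R :=
  match n with
  | O => x
  | S n' => f (iter f n' x)
  end.

Definition least_period (f : R -> R) (k : nat) (x : R) : Prop :=
  (0 < k)%nat /\ iter f k x = x /\
  (forall i : nat, (0 < i < k)%nat -> iter f i x <> x).

Definition cont_on (a b : R) (f : R -> R) : Prop :=
  forall x, a <= x <= b -> forall eps, 0 < eps ->
    exists delta, 0 < delta /\
      forall y, a <= y <= b -> Rabs (y - x) < delta -> Rabs (f y - f x) < eps.

Definition is_min_of (S : R -> Prop) (x : R) : Prop :=
  S x /\ forall y, S y -> x <= y.

Definition is_max_of (S : R -> Prop) (x : R) : Prop :=
  S x /\ forall y, S y -> y <= x.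

(* Main.v *)
Require Import Defs.
From Stdlib Require Import Reals Lra Lia.
Open Scope R_scope.

Lemma iter_add (f : R -> R) (n k : nat) (x : R) :
  iter f (n + k) x = iter f n (iter f k x).
Proof. induction n; simpl; [reflexivity | now rewrite IHn]. Qed.

Lemma iter_inv (a b : R) (f : R -> R) :
  (forall x, a <= x <= b -> a <= f x <= b) ->
  forall n x, a <= x <= b -> a <= iter f n x <= b.
Proof. intros H n; induction n; intros x Hx; simpl; auto. Qed.

Definition clamp (a b x : R) := Rmax a (Rmin b x).

Lemma clamp_lip a b x y : a <= b -> Rabs (clamp a b y - clamp a b x) <= Rabs (y - x).
Proof.
  intros. unfold clamp, Rmax, Rmin.
  repeat destruct Rle_dec; unfold Rabs; repeat destruct Rcase_abs; lra.
Qed.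

Lemma clamp_in a b x : a <= b -> a <= clamp a b x <= b.
Proof. intros. unfold clamp, Rmax, Rmin; repeat destruct Rle_dec; lra. Qed.

Lemma clamp_id a b x : a <= x <= b -> clamp a b x = x.
Proof. intros. unfold clamp, Rmax, Rmin; repeat destruct Rle_dec; lra. Qed.

Lemma ext_cont (a b : R) (f : R -> R) :
  a <= b -> cont_on a b f -> continuity (fun x => f (clamp a b x)).
Proof.
  intros Hab Hc x0.
  unfold continuity_pt, continue_in, limit1_in, limit_in; simpl; unfold R_dist.
  intros eps Heps.
  destruct (Hc (clamp a b x0) (clamp_in a b x0 Hab) eps Heps) as [del [Hd Hdel]].
  exists del; split; [lra|].
  intros y [_ Hy].
  apply Hdel. apply clamp_in; auto.
  eapply Rle_lt_trans; [apply clamp_lip; auto| exact Hy].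
Qed.

Lemma ivt_iter (a b : R) (f : R -> R) :
  a <= b -> cont_on a b f -> (forall x, a <= x <= b -> a <= f x <= b) ->
  forall n s t lo hi, a <= lo -> lo <= hi -> hi <= b ->
  (iter f n lo - s*lo - t) * (iter f n hi - s*hi - t) <= 0 ->
  exists y, lo <= y <= hi /\ iter f n y - s*y - t = 0.
Proof.
  intros Hab Hc Hinv n s t lo hi H1 H2 H3 Hs.
  set (g := fun x => f (clamp a b x)).
  assert (Hg : continuity g) by (apply ext_cont; auto).
  assert (Heq : forall k x, a <= x <= b -> iter g k x = iter f k x).
  { induction k; intros x Hx; simpl; auto. rewrite IHk; auto.
    unfold g. rewrite clamp_id; auto. apply iter_inv; auto. }
  assert (Hgc : forall k, continuity (fun y => iter g k y)).
  { induction k; simpl.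
    - intro y; apply derivable_continuous_pt, derivable_pt_id.
    - apply (continuity_comp (fun y => iter g k y) g); auto. }
  assert (Hcont : continuity (fun y => iter g n y - s*y - t)).
  { intro y.
    apply continuity_pt_minus. apply continuity_pt_minus. apply Hgc.
    apply continuity_pt_mult. apply continuity_pt_const. intros ??; reflexivity.
    apply derivable_continuous_pt, derivable_pt_id.
    apply continuity_pt_const. intros ??; reflexivity. }
  destruct (IVT_cor _ lo hi Hcont H2) as [y [Hy Hy0]].
  { rewrite !Heq by lra. exact Hs. }
  exists y; split; auto. rewrite <- Heq by lra. exact Hy0.
Qed.

Lemma prod_le0 A B : (A <= 0 <= B \/ B <= 0 <= A) -> A * B <= 0.
Proof. intros [[]|[]]; nra. Qed.
Theorem lemma9 (a b : R) (f : R -> R) (m : nat) (p v z z0 d u1 u0' : R)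
  (mu : nat -> R) :
  a <= b ->
  cont_on a b f ->
  (forall x, a <= x <= b -> a <= f x <= b) ->
  Nat.Odd m -> (3 <= m)%nat ->
  (* p = min P, where P is the orbit of p, of least period m *)
  a <= p <= b ->
  least_period f m p ->
  (forall i : nat, p <= iter f i p) ->
  (* e = f^(m-1)(min P) *)
  p <= v < iter f (m - 1) p ->
  f v = iter f (m - 1) p ->
  v < z < iter f (m - 1) p ->
  f z = z ->
  is_min_of (fun x => v <= x <= z /\ iter f 2 x = x) z0 ->
  is_max_of (fun x => p <= x <= v /\ iter f 2 x = z0) d ->
  is_min_of (fun x => d <= x <= v /\ iter f 2 x = d) u1 ->
  is_max_of (fun x => u1 <= x <= v /\ iter f 2 x = d) u0' ->
  (forall n : nat, (1 <= n)%nat ->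
     is_min_of (fun x => u0' <= x <= v /\ iter f (m + 2 * n) x = d) (mu n)) ->
  forall n : nat, (1 <= n)%nat ->
  forall (x : R) (k : nat),
    u0' <= x <= mu n ->
    least_period f k x ->
    Nat.Odd k ->
    (m + 2 * n <= k)%nat.
Proof.
  intros Hab Hc Hinv Hmodd Hm3 Hp [_ [Hpm Hpl]] _ Hv Hfv Hz _ [[Hz0a Hz0b] Hz0m]
    [[Hda Hdb] Hdm] [[Hu1a Hu1b] Hu1m] [[Hua Hub] Hum] Hmu n Hn x k Hx [Hk0 [Hkx _]] Hkodd.
  set (e := iter f (m - 1) p) in *.
  assert (He : a <= e <= b) by (apply iter_inv; auto).
  assert (ivt_t : forall j lo hi t, a <= lo -> lo <= hi -> hi <= b ->
     (iter f j lo <= t <= iter f j hi \/ iter f j hi <= t <= iter f j lo) ->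
     exists y, lo <= y <= hi /\ iter f j y = t).
  { intros j lo hi t H1 H2 H3 H4.
    destruct (ivt_iter a b f Hab Hc Hinv j 0 t lo hi H1 H2 H3) as [y [Hy Hy0]].
    apply prod_le0; lra. exists y; split; auto; lra. }
  assert (ivt_f : forall j lo hi, a <= lo -> lo <= hi -> hi <= b ->
     (iter f j lo - lo) * (iter f j hi - hi) <= 0 ->
     exists y, lo <= y <= hi /\ iter f j y = y).
  { intros j lo hi H1 H2 H3 H4.
    destruct (ivt_iter a b f Hab Hc Hinv j 1 0 lo hi H1 H2 H3) as [y [Hy Hy0]].
    replace (iter f j lo - 1 * lo - 0) with (iter f j lo - lo) by ring.
    replace (iter f j hi - 1 * hi - 0) with (iter f j hi - hi) by ring. auto.
    exists y; split; auto; lra. }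
  assert (Hfe : f e = p).
  { unfold e. change (iter f (S (m - 1)) p = p). replace (S (m - 1)) with m by lia. auto. }
  assert (Hv2 : iter f 2 v = p) by (simpl; rewrite Hfv; exact Hfe).
  assert (Hpv : p < v).
  { destruct (Rle_lt_or_eq_dec _ _ (proj1 Hv)) as [H|H]; auto. exfalso.
    apply (Hpl 2%nat); [lia|]. rewrite <- H in Hv2. exact Hv2. }
  assert (Hvz0 : v < z0).
  { destruct (Rle_lt_or_eq_dec _ _ (proj1 Hz0a)) as [H|H]; auto.
    rewrite <- H in Hz0b. lra. }
  assert (Hev : forall j y, iter f 2 y = y -> iter f (2 * j) y = y).
  { induction j; intros y Hy; [reflexivity|].
    replace (2 * S j)%nat with (2 * j + 2)%nat by lia. rewrite iter_add, Hy; auto. }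
  assert (Hper : forall j y, iter f k y = y -> iter f (k * j) y = y).
  { induction j; intros y Hy; [rewrite Nat.mul_0_r; reflexivity|].
    replace (k * S j)%nat with (k * j + k)%nat by lia. rewrite iter_add, Hy; auto. }
  assert (Hfz0 : z0 <= f z0).
  { destruct (Rle_or_lt z0 (f z0)) as [H|H]; auto. exfalso.
    destruct (ivt_f 1%nat v z0) as [y [Hy Hy1]]; try lra.
    simpl. apply prod_le0; lra.
    simpl in Hy1.
    assert (z0 <= y). { apply Hz0m. split; [lra|]. simpl; rewrite !Hy1; auto. }
    assert (y = z0) by lra. subst y. lra. }
  assert (Hdec : forall y, v <= y < z0 -> iter f 2 y < y).
  { intros y Hy. destruct (Rlt_or_le (iter f 2 y) y) as [H|H]; auto. exfalso.
    destruct (ivt_f 2%nat v y) as [w [Hw Hw1]]; try lra.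
    apply prod_le0; lra.
    assert (z0 <= w) by (apply Hz0m; split; [lra|auto]). lra. }
  assert (Hlt : forall y, d < y <= v -> iter f 2 y < z0).
  { intros y Hy. destruct (Rlt_or_le (iter f 2 y) z0) as [H|H]; auto. exfalso.
    destruct (ivt_t 2%nat y v z0) as [w [Hw Hw1]]; try lra.
    assert (w <= d) by (apply Hdm; split; [lra|auto]). lra. }
  assert (Hq : f d < d \/ z0 <= f d).
  { assert (Hq2 : iter f 2 (f d) = f z0).
    { simpl. f_equal. simpl in Hdb. exact Hdb. }
    destruct (Rlt_or_le (f d) d) as [H|H]; [left; auto|].
    destruct (Rle_or_lt z0 (f d)) as [H'|H']; [right; auto|]. exfalso.
    destruct (Rle_lt_or_eq_dec _ _ H) as [H1|H1].
    - destruct (Rle_or_lt (f d) v) as [H2|H2].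
      + assert (iter f 2 (f d) < z0) by (apply Hlt; lra). lra.
      + assert (iter f 2 (f d) < f d) by (apply Hdec; lra). lra.
    - simpl in Hdb. rewrite <- H1 in Hdb. rewrite <- H1 in Hdb. lra. }
  assert (Hpd : p < d).
  { destruct (Rle_lt_or_eq_dec _ _ (proj1 Hda)) as [H|H]; auto. exfalso.
    rewrite <- H in Hdb.
    assert (Hpp : iter f (2 * m) p = p).
    { replace (2 * m)%nat with (m + m)%nat by lia. rewrite iter_add, Hpm; auto. }
    replace (2 * m)%nat with (2 * (m - 1) + 2)%nat in Hpp by lia.
    rewrite iter_add, Hdb, Hev in Hpp; auto. lra. }
  assert (Hdu1 : d < u1).
  { destruct (Rle_lt_or_eq_dec _ _ (proj1 Hu1a)) as [H|H]; auto. exfalso.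
    rewrite <- H in Hu1b. lra. }
  assert (R1 : forall r t, p <= t <= z0 -> exists w, v <= w <= z0 /\ iter f (2 * S r) w = t).
  { induction r; intros t Ht.
    - apply ivt_t; try lra. left. change (2 * 1)%nat with 2%nat. rewrite Hz0b, Hv2. lra.
    - destruct (IHr t Ht) as [w' [Hw' Hw'1]].
      destruct (ivt_t 2%nat v z0 w') as [w [Hw Hw1]]; try lra.
      exists w; split; auto.
      replace (2 * S (S r))%nat with (2 * S r + 2)%nat by lia.
      rewrite iter_add, Hw1; auto. }
  assert (R2 : forall r, exists w, d <= w <= u1 /\ iter f (2 * r) w = d).
  { induction r.
    - exists d; split; [lra|reflexivity].
    - destruct IHr as [w' [Hw' Hw'1]].
      destruct (ivt_t 2%nat d u1 w') as [w [Hw Hw1]]; try lra.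
      exists w; split; auto.
      replace (2 * S r)%nat with (2 * r + 2)%nat by lia.
      rewrite iter_add, Hw1; auto. }
  destruct (Hmu n Hn) as [[Hmua Hmub] Hmum].
  destruct (Nat.le_gt_cases (m + 2 * n) k) as [Hle|Hlt']; auto. exfalso.
  destruct Hkodd as [j Hj]. destruct Hmodd as [i Hi].
  destruct j as [|j].
  -
    subst k. simpl in Hkx.
    assert (Hx2 : iter f 2 x = x) by (simpl; rewrite !Hkx; auto).
    destruct (ivt_t 2%nat x v d) as [y [Hy Hy1]]; try lra.
    assert (y <= u0') by (apply Hum; split; [lra|auto]).
    assert (y = x) by lra. subst y. lra.
  - set (c := iter f k u0').
    assert (Hc' : c <= d \/ z0 <= c).
    { unfold c. destruct j as [|j].
      + subst k. simpl. simpl in Hub. rewrite Hub. lra.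
      + replace k with (1 + 2 * j + 2 + 2)%nat by lia.
        rewrite !iter_add, Hub, Hdb, Hev by auto. simpl. lra. }
    set (r := (i + n - S j)%nat).
    assert (Hr : (m + 2 * n = 2 * r + k)%nat) by (unfold r; lia).
    assert (Hw : exists w, (c <= w <= x \/ x <= w <= c) /\ iter f (2 * r) w = d).
    { destruct Hc' as [Hc'|Hc'].
      - destruct (R2 r) as [w [Hw Hw1]]. exists w; split; auto. lra.
      - destruct (R1 (r - 1)%nat d) as [w [Hw Hw1]]; try lra.
        replace (2 * S (r - 1))%nat with (2 * r)%nat in Hw1 by (unfold r in *; lia).
        exists w; split; auto. lra. }
    destruct Hw as [w [Hw Hw1]].
    destruct (ivt_t k u0' x w) as [y [Hy Hy1]]; try lra.
    { rewrite Hkx. fold c. lra. }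
    assert (Hyd : iter f (m + 2 * n) y = d) by (rewrite Hr, iter_add, Hy1; auto).
    assert (mu n <= y) by (apply Hmum; split; [lra|auto]).
    assert (y = x) by lra. subst y.
    assert (Hxx : iter f (k * (m + 2 * n + 2)) x = x) by (apply Hper; auto).
    replace (k * (m + 2 * n + 2))%nat with (2 * (S j * (m + 2 * n + 2)) + 2 + (m + 2 * n))%nat in Hxx by lia.
    rewrite iter_add, Hyd, iter_add, Hdb, Hev in Hxx by auto. lra.
Qed.
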